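(* Let $A,B,C$ be smooth functions on $[0,1]$ and consider the Abel equation $$\frac{dx}{dt}=A(t)x^3+B(t)x^2+C(t)x,\qquad t\in[0,1].$$ Assume that there exist real numbers $a,b,c$ such that $aA(t)+bB(t)$ is not identically zero and does not change sign on $[0,1]$, and such that $$(bC(t)-cA(t))^2+(aA(t)+bB(t))(cB(t)+aC(t))<0\quad\text{for all } t\in[0,1].$$ Then the equation has at most four non-zero periodic orbits.
   Context: A periodic orbit is a solution $x(t)$ defined on all of $[0,1]$ with $x(0)=x(1)$; $x\equiv0$ is always one, and non-zero periodic orbits are the others. *)

(* Defs.v *)
From Stdlib Require Import Reals Lra List.
From Coquelicot Require Import Coquelicot.
Open Scope R_scope.

Definition smooth (f : R -> R) : Prop :=
  forall (n : nat) (t : R), ex_derive_n f n t.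

Definition abel_rhs (A B C : R -> R) (t x : R) : R :=
  A t * x ^ 3 + B t * x ^ 2 + C t * x.

(* Derivative of x at t relative to [0,1] (one-sided at the endpoints). *)
Definition has_deriv_on01 (x : R -> R) (t l : R) : Prop :=
  filterlim (fun h => (x (t + h) - x t) / h)
    (within (fun h => h <> 0 /\ 0 <= t + h <= 1) (locally 0))
    (locally l).

Definition abel_solution (A B C : R -> R) (x : R -> R) : Prop :=
  forall t, 0 <= t <= 1 -> has_deriv_on01 x t (abel_rhs A B C t (x t)).

Definition periodic_orbit (A B C : R -> R) (x : R -> R) : Prop :=
  abel_solution A B C x /\ x 0 = x 1.

Definition nonzero_periodic_orbit (A B C : R -> R) (x : R -> R) : Prop :=
  periodic_orbit A B C x /\ exists t, 0 <= t <= 1 /\ x t <> 0.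

Definition differ_on01 (x y : R -> R) : Prop :=
  exists t, 0 <= t <= 1 /\ x t <> y t.

(* Main.v *)
Require Import Defs.
From Stdlib Require Import Reals Lra List Lia Classical.
From Coquelicot Require Import Coquelicot.
Open Scope R_scope.

Definition clamp (t : R) : R := Rmax 0 (Rmin 1 t).
Definition ext (x : R -> R) (t : R) : R := x (clamp t).

Lemma clamp_in t : 0 <= clamp t <= 1.
Proof. unfold clamp, Rmax, Rmin; repeat destruct Rle_dec; lra. Qed.

Lemma clamp_id t : 0 <= t <= 1 -> clamp t = t.
Proof. intros; unfold clamp, Rmax, Rmin; repeat destruct Rle_dec; lra. Qed.



Lemma clamp_lip s t : Rabs (clamp s - clamp t) <= Rabs (s - t).
Proof.
  unfold clamp, Rmax, Rmin; repeat destruct Rle_dec;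
  unfold Rabs; repeat destruct Rcase_abs; lra.
Qed.

Lemma within_unpack x t l : has_deriv_on01 x t l ->
  forall eps, 0 < eps -> exists del, 0 < del /\ forall h, Rabs h < del -> h <> 0 ->
    0 <= t + h <= 1 -> Rabs ((x (t+h) - x t)/h - l) < eps.
Proof.
  intros H eps Heps.
  apply (proj1 (filterlim_locally _ _)) with (eps := mkposreal eps Heps) in H.
  destruct H as [d Hd]. exists d. split. apply cond_pos.
  intros h Hh H0 H1. specialize (Hd h).
  assert (B : ball 0 d h).
  { unfold ball; simpl; unfold AbsRing_ball, abs, minus, plus, opp; simpl. 
    replace (h + - 0) with h by ring. exact Hh. }
  specialize (Hd B (conj H0 H1)).
  revert Hd. unfold ball; simpl; unfold AbsRing_ball, abs, minus, plus, opp; simpl. auto.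
Qed.

Lemma deriv_cont x (l : R -> R) :
  (forall t, 0 <= t <= 1 -> has_deriv_on01 x t (l t)) ->
  forall t, continuity_pt (ext x) t.
Proof.
  intros H t. set (c := clamp t).
  destruct (within_unpack x c (l c) (H c (clamp_in t)) 1 Rlt_0_1) as [d [Hd Hu]].
  unfold continuity_pt, continue_in, limit1_in, limit_in; simpl; unfold R_dist.
  intros eps Heps.
  exists (Rmin d (eps / (Rabs (l c) + 1))). split.
  { apply Rmin_glb_lt; auto. apply Rdiv_lt_0_compat; auto. pose proof (Rabs_pos (l c)); lra. }
  intros s [_ Hs].
  unfold ext. fold c.
  set (h := clamp s - c).
  assert (Hh : Rabs h <= Rabs (s - t)) by apply clamp_lip.
  assert (Hcs : clamp s = c + h) by (unfold h; ring).
  destruct (Req_dec h 0) as [E|E].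
  { rewrite Hcs, E, Rplus_0_r, Rminus_diag, Rabs_R0; auto. }
  assert (Hm1 := Rmin_l d (eps / (Rabs (l c) + 1))).
  assert (Hm2 := Rmin_r d (eps / (Rabs (l c) + 1))).
  specialize (Hu h ltac:(lra) E ltac:(rewrite <- Hcs; apply clamp_in)).
  rewrite <- Hcs in Hu. rewrite Hcs in *.
  set (u := (x (c + h) - x c) / h) in Hu.
  assert (Eu : x (c + h) - x c = u * h) by (unfold u; field; auto).
  rewrite Eu, Rabs_mult.
  assert (Rabs u < Rabs (l c) + 1).
  { pose proof (Rabs_triang_inv u (l c)). lra. }
  assert (Rabs h < eps / (Rabs (l c) + 1)) by lra.
  assert (Hp : 0 < Rabs (l c) + 1) by (pose proof (Rabs_pos (l c)); lra).
  apply Rle_lt_trans with ((Rabs (l c) + 1) * Rabs h).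
  { apply Rmult_le_compat_r. apply Rabs_pos. lra. }
  apply Rmult_lt_reg_l with (/ (Rabs (l c) + 1)). apply Rinv_0_lt_compat; lra.
  rewrite <- Rmult_assoc, Rinv_l by lra. unfold Rdiv in *. lra.
Qed.

Lemma deriv_int x t l : has_deriv_on01 x t l -> 0 < t < 1 -> is_derive (ext x) t l.
Proof.
  intros H Ht. apply is_derive_Reals.
  intros eps Heps.
  destruct (within_unpack x t l H eps Heps) as [d [Hd Hu]].
  assert (Hp : 0 < Rmin d (Rmin t (1 - t))).
  { repeat apply Rmin_glb_lt; lra. }
  exists (mkposreal _ Hp). simpl. intros h Hh0 Hh.
  pose proof (Rmin_l d (Rmin t (1 - t))). pose proof (Rmin_r d (Rmin t (1 - t))).
  pose proof (Rmin_l t (1 - t)). pose proof (Rmin_r t (1 - t)).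
  assert (-t < h < 1 - t) by (unfold Rabs in Hh; destruct Rcase_abs; lra).
  unfold ext. rewrite !clamp_id by lra.
  apply Hu; lra.
Qed.

Lemma clamp_cont t : continuity_pt clamp t.
Proof.
  unfold continuity_pt, continue_in, limit1_in, limit_in; simpl; unfold R_dist.
  intros eps Heps. exists eps. split; auto. intros s [_ Hs].
  eapply Rle_lt_trans. apply clamp_lip. auto.
Qed.

Lemma smooth_cont f : smooth f -> forall t, continuity_pt f t.
Proof.
  intros H t. apply continuity_pt_filterlim. apply (ex_derive_continuous f t).
  exact (H 1%nat t).
Qed.

Lemma ext_cont f : (forall t, continuity_pt f t) -> forall t, continuity_pt (ext f) t.
Proof.
  intros H t. change (continuity_pt (comp f clamp) t).
  apply continuity_pt_comp. apply clamp_cont. apply H.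
Qed.

Lemma ext_id f t : 0 <= t <= 1 -> ext f t = f t.
Proof. intros; unfold ext; rewrite clamp_id; auto. Qed.

Lemma is_derive_eq (f : R -> R) (x l l' : R) : is_derive f x l -> l = l' -> is_derive f x l'.
Proof. intros; subst; auto. Qed.

Lemma sol_cont A B C x : abel_solution A B C x -> forall t, continuity_pt (ext x) t.
Proof.
  intros H. apply (deriv_cont x (fun t => abel_rhs A B C t (x t))). exact H.
Qed.

Lemma sol_der A B C x : abel_solution A B C x -> forall t, 0 < t < 1 ->
  is_derive (ext x) t (abel_rhs A B C t (x t)).
Proof.
  intros H t Ht. apply deriv_int; auto. apply H; lra.
Qed.

Lemma bound01 f : (forall t, continuity_pt f t) -> exists M, forall t, 0 <= t <= 1 -> Rabs (f t) <= M.
Proof.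
  intros H.
  destruct (continuity_ab_maj (fun t => Rabs (f t)) 0 1 ltac:(lra)) as [m [Hm _]].
  { intros c _. change (continuity_pt (comp Rabs f) c). apply continuity_pt_comp; auto.
    apply Rcontinuity_abs. }
  exists (Rabs (f m)). auto.
Qed.

Lemma e_der D K k s : is_derive D s (D s * K s) ->
  is_derive (fun s => D s ^ 2 * exp (k * s)) s (D s ^ 2 * (2 * K s + k) * exp (k * s)).
Proof.
  intros H.
  assert (H1 := is_derive_pow D 2 s _ H).
  assert (H2 : is_derive (fun s => exp (k * s)) s (k * exp (k * s))).
  { auto_derive; auto. ring. }
  assert (H3 := is_derive_mult _ _ _ _ _ H1 H2 Rmult_comm).
  simpl in H3. eapply is_derive_eq. exact H3.
  unfold plus, mult; simpl. ring.
Qed.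

Lemma e_cont D k s : (forall t, continuity_pt D t) -> continuity_pt (fun s => D s ^ 2 * exp (k * s)) s.
Proof.
  intros H.
  apply continuity_pt_mult.
  - apply (continuity_pt_comp D (fun u => u ^ 2)). auto. apply derivable_continuous_pt.
    apply derivable_pt_pow.
  - apply (continuity_pt_comp (fun s => k * s) exp).
    apply continuity_pt_mult. apply continuity_pt_const; intros ? ?; auto. apply continuity_pt_id.
    apply derivable_continuous_pt, derivable_pt_exp.
Qed.

Lemma gron D K M : (forall t, continuity_pt D t) ->
  (forall t, 0 < t < 1 -> is_derive D t (D t * K t)) ->
  (forall t, 0 <= t <= 1 -> Rabs (K t) <= M) ->
  forall t0, 0 <= t0 <= 1 -> D t0 = 0 -> forall t, 0 <= t <= 1 -> D t = 0.
Proof.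
  intros Hc Hd HK t0 Ht0 HD0 t Ht.
  destruct (Rtotal_order t0 t) as [Hlt|[Heq|Hgt]].
  - destruct (MVT_gen (fun s => D s ^ 2 * exp (-2 * M * s)) t0 t
       (fun s => D s ^ 2 * (2 * K s + (-2 * M)) * exp (-2 * M * s))) as [c [Hc1 Hc2]].
    + rewrite Rmin_left, Rmax_right by lra. intros s Hs.
      apply e_der. apply Hd. lra.
    + intros; apply e_cont; auto.
    + rewrite Rmin_left, Rmax_right in Hc1 by lra.
      rewrite HD0 in Hc2.
      assert (HKc := HK c ltac:(lra)).
      assert (Rabs (K c) >= K c) by (unfold Rabs; destruct Rcase_abs; lra).
      assert (E1 := exp_pos (-2 * M * c)). assert (E2 := exp_pos (-2 * M * t)).
      assert (0 <= D c ^ 2) by (apply pow2_ge_0).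
      assert (0 <= D t ^ 2) by (apply pow2_ge_0).
      assert (D c ^ 2 * (2 * K c + -2 * M) * exp (-2 * M * c) * (t - t0) <= 0).
      { apply Rmult_le_0_r; [|lra]. rewrite Rmult_comm. apply Rmult_le_0_l. lra.
        apply Rmult_le_0_l; lra. }
      assert (D t ^ 2 * exp (-2 * M * t) <= 0) by (simpl in Hc2 |- *; lra).
      assert (D t ^ 2 = 0).
      { apply Rle_antisym; auto. apply Rmult_le_reg_r with (exp (-2 * M * t)); lra. }
      simpl in H4. nra.
  - subst; auto.
  - destruct (MVT_gen (fun s => D s ^ 2 * exp (2 * M * s)) t t0
       (fun s => D s ^ 2 * (2 * K s + (2 * M)) * exp (2 * M * s))) as [c [Hc1 Hc2]].
    + rewrite Rmin_left, Rmax_right by lra. intros s Hs.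
      apply e_der. apply Hd. lra.
    + intros; apply e_cont; auto.
    + rewrite Rmin_left, Rmax_right in Hc1 by lra.
      rewrite HD0 in Hc2.
      assert (HKc := HK c ltac:(lra)).
      assert (Rabs (K c) >= - K c) by (unfold Rabs; destruct Rcase_abs; lra).
      assert (E1 := exp_pos (2 * M * c)). assert (E2 := exp_pos (2 * M * t)).
      assert (0 <= D c ^ 2) by (apply pow2_ge_0).
      assert (0 <= D t ^ 2) by (apply pow2_ge_0).
      assert (0 <= D c ^ 2 * (2 * K c + 2 * M) * exp (2 * M * c) * (t0 - t)).
      { apply Rmult_le_pos; [|lra]. apply Rmult_le_pos; [|lra]. apply Rmult_le_pos; lra. }
      assert (D t ^ 2 * exp (2 * M * t) <= 0) by (simpl in Hc2 |- *; lra).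
      assert (D t ^ 2 = 0).
      { apply Rle_antisym; auto. apply Rmult_le_reg_r with (exp (2 * M * t)); lra. }
      simpl in H4. nra.
Qed.

Lemma uniq A B C x y : smooth A -> smooth B -> smooth C ->
  abel_solution A B C x -> abel_solution A B C y ->
  forall t0, 0 <= t0 <= 1 -> x t0 = y t0 -> forall t, 0 <= t <= 1 -> x t = y t.
Proof.
  intros SA SB SC Hx Hy t0 Ht0 E t Ht.
  set (D := fun s => ext x s - ext y s).
  set (K := fun s => ext A s * (ext x s ^ 2 + ext x s * ext y s + ext y s ^ 2)
                     + ext B s * (ext x s + ext y s) + ext C s).
  assert (CA := ext_cont A (smooth_cont A SA)).
  assert (CB := ext_cont B (smooth_cont B SB)).
  assert (CC := ext_cont C (smooth_cont C SC)).
  assert (CX := sol_cont A B C x Hx). assert (CY := sol_cont A B C y Hy).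
  assert (HKc : forall s, continuity_pt K s).
  { intros s. unfold K. 
    repeat first [apply continuity_pt_plus | apply continuity_pt_mult | apply continuity_pt_const; intros ? ?; reflexivity | auto]. }
  destruct (bound01 K HKc) as [M HM].
  assert (HD : forall s, continuity_pt D s).
  { intros s; unfold D; apply continuity_pt_minus; auto. }
  assert (G := gron D K M HD).
  assert (Z : D t = 0).
  { refine (G _ HM t0 Ht0 _ t Ht).
    - intros s Hs. unfold D.
      assert (H1 := sol_der A B C x Hx s Hs). assert (H2 := sol_der A B C y Hy s Hs).
      assert (H3 := is_derive_minus _ _ _ _ _ H1 H2). eapply is_derive_eq. exact H3.
      unfold minus, plus, opp, K, abel_rhs; simpl. rewrite !ext_id by lra. ring.
    - unfold D. rewrite !ext_id by lra. lra. }
  unfold D in Z. rewrite !ext_id in Z by lra. lra.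
Qed.

Definition ZP (F : R -> R) := forall t, 0 <= t <= 1 -> F t = 0 ->
  exists d, 0 < d /\ forall s, 0 <= s <= 1 -> s <> t -> Rabs (s - t) < d -> F s * (s - t) > 0.

Lemma cont_nbhd F m : continuity_pt F m -> forall eps, 0 < eps ->
  exists alp, 0 < alp /\ forall s, Rabs (s - m) < alp -> Rabs (F s - F m) < eps.
Proof.
  intros H eps He.
  unfold continuity_pt, continue_in, limit1_in, limit_in in H; simpl in H; unfold R_dist in H.
  destruct (H eps He) as [alp [Ha Hs]]. exists alp; split; auto.
  intros s Hsm. destruct (Req_dec s m). subst. rewrite Rminus_diag, Rabs_R0; auto.
  apply Hs. repeat split; auto.
Qed.

Lemma cross_fwd F u v : (forall t, continuity_pt F t) -> ZP F -> 0 <= u -> u < v -> v <= 1 ->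
  F u >= 0 -> F v < 0 -> False.
Proof.
  intros HC HZ Hu Huv Hv Fu Fv.
  set (E := fun t => u <= t <= v /\ F t >= 0).
  destruct (completeness E) as [m [Hub Hlub]].
  { exists v. intros z [Hz _]. lra. }
  { exists u. split; lra. }
  assert (Hum : u <= m) by (apply Hub; split; lra).
  assert (Hmv : m <= v) by (apply Hlub; intros z [Hz _]; lra).
  assert (Fm : F m >= 0).
  { destruct (Rge_or_lt (F m) 0) as [|Hn]; auto. exfalso.
    destruct (cont_nbhd F m (HC m) (- F m) ltac:(lra)) as [alp [Ha Hs]].
    assert (m <= m - alp / 2); [|lra].
    apply Hlub. intros z [Hz Fz].
    destruct (Rle_or_lt z (m - alp/2)) as [|Hz2]; auto. exfalso.
    assert (z <= m) by (apply Hub; split; auto).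
    assert (Rabs (z - m) < alp) by (unfold Rabs; destruct Rcase_abs; lra).
    specialize (Hs z H0). unfold Rabs in Hs; destruct Rcase_abs in Hs; lra. }
  assert (Hmv' : m < v) by (destruct (Req_dec m v); [subst; lra | lra]).
  assert (exists s, m < s <= v /\ F s >= 0) as [s [Hs Fs]].
  { destruct (Rgt_or_ge (F m) 0) as [Fp|F0].
    - destruct (cont_nbhd F m (HC m) (F m) Fp) as [alp [Ha Hs]].
      exists (m + Rmin alp (v - m) / 2).
      pose proof (Rmin_l alp (v - m)). pose proof (Rmin_r alp (v - m)).
      assert (0 < Rmin alp (v - m)) by (apply Rmin_glb_lt; lra).
      split. lra.
      assert (Rabs (m + Rmin alp (v - m) / 2 - m) < alp) by (unfold Rabs; destruct Rcase_abs; lra).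
      specialize (Hs _ H2). unfold Rabs in Hs; destruct Rcase_abs in Hs; lra.
    - assert (F m = 0) by lra.
      destruct (HZ m ltac:(lra) H) as [d [Hd Hds]].
      exists (m + Rmin d (v - m) / 2).
      pose proof (Rmin_l d (v - m)). pose proof (Rmin_r d (v - m)).
      assert (0 < Rmin d (v - m)) by (apply Rmin_glb_lt; lra).
      split. lra.
      assert (Rabs (m + Rmin d (v - m) / 2 - m) < d) by (unfold Rabs; destruct Rcase_abs; lra).
      specialize (Hds (m + Rmin d (v - m) / 2) ltac:(lra) ltac:(lra) H3).
      replace (m + Rmin d (v - m) / 2 - m) with (Rmin d (v - m) / 2) in Hds by ring.
      assert (Hq : 0 < Rmin d (v - m) / 2) by lra.
      destruct (Rge_or_lt (F (m + Rmin d (v - m) / 2)) 0); auto.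
      exfalso. assert (F (m + Rmin d (v - m) / 2) * (Rmin d (v - m) / 2) < 0).
      apply Rmult_neg_pos; auto. lra. }
  assert (s <= m) by (apply Hub; split; lra). lra.
Qed.

Lemma cross_bwd F u v : (forall t, continuity_pt F t) -> ZP F -> 0 <= u -> u < v -> v <= 1 ->
  F v <= 0 -> F u > 0 -> False.
Proof.
  intros HC HZ Hu Huv Hv Fv Fu.
  apply (cross_fwd (fun s => - F (1 - s)) (1 - v) (1 - u)); try lra.
  - intros t. apply continuity_pt_opp.
    apply (continuity_pt_comp (fun s => 1 - s) F). 
    apply continuity_pt_minus. apply continuity_pt_const; intros ? ?; auto. apply continuity_pt_id.
    apply HC.
  - intros t Ht Ft. destruct (HZ (1 - t) ltac:(lra) ltac:(lra)) as [d [Hd Hds]].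
    exists d; split; auto. intros s Hs Hst Hsd.
    specialize (Hds (1 - s) ltac:(lra) ltac:(lra)).
    replace (1 - s - (1 - t)) with (- (s - t)) in Hds by ring.
    rewrite Rabs_Ropp in Hds. specialize (Hds Hsd). lra.
  - replace (1 - (1 - v)) with v by ring. lra.
  - replace (1 - (1 - u)) with u by ring. lra.
Qed.

Lemma no_zero F : (forall t, continuity_pt F t) -> ZP F -> F 0 = F 1 ->
  forall t, 0 <= t <= 1 -> F t <> 0.
Proof.
  intros HC HZ E01 t0 Ht0 F0.
  assert (F1 : F 1 >= 0).
  { destruct (Req_dec t0 1). subst; lra.
    destruct (Rge_or_lt (F 1) 0); auto. exfalso. apply (cross_fwd F t0 1); auto; lra. }
  assert (F0' : F 0 <= 0).
  { destruct (Req_dec t0 0). subst; lra.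
    destruct (Rle_or_lt (F 0) 0); auto. exfalso. apply (cross_bwd F 0 t0); auto; lra. }
  destruct (HZ 0 ltac:(lra) ltac:(lra)) as [d1 [Hd1 H1]].
  destruct (HZ 1 ltac:(lra) ltac:(lra)) as [d2 [Hd2 H2]].
  set (e := Rmin d1 (Rmin d2 1) / 3).
  pose proof (Rmin_l d1 (Rmin d2 1)). pose proof (Rmin_r d1 (Rmin d2 1)).
  pose proof (Rmin_l d2 1). pose proof (Rmin_r d2 1).
  assert (0 < Rmin d1 (Rmin d2 1)) by (repeat apply Rmin_glb_lt; lra).
  assert (He : 0 < e) by (unfold e; lra).
  specialize (H1 e ltac:(unfold e; lra) ltac:(lra) ltac:(rewrite Rminus_0_r, Rabs_pos_eq; unfold e; lra)).
  specialize (H2 (1 - e) ltac:(unfold e; lra) ltac:(lra)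
     ltac:(replace (1 - e - 1) with (- e) by ring; rewrite Rabs_Ropp, Rabs_pos_eq; unfold e; lra)).
  rewrite Rminus_0_r in H1. replace (1 - e - 1) with (- e) in H2 by ring.
  assert (F e > 0) by nra. assert (F (1 - e) < 0) by nra.
  apply (cross_fwd F e (1 - e)); auto; unfold e in *; lra.
Qed.

Definition qf (a b c y : R) := b * y ^ 2 - a * y + c.
Definition Pf (Av Bv Cv y : R) := Av * y ^ 2 + Bv * y + Cv.

Lemma key_alg Av Bv Cv a b c y :
  (b * Cv - c * Av) ^ 2 + (a * Av + b * Bv) * (c * Bv + a * Cv) < 0 ->
  (a * Av + b * Bv) * ((2 * Av * y + Bv) * qf a b c y - Pf Av Bv Cv y * (2 * b * y - a)) < 0.
Proof.
  intros H. unfold qf, Pf.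
  replace ((a * Av + b * Bv) * ((2 * Av * y + Bv) * (b * y ^ 2 - a * y + c) -
     (Av * y ^ 2 + Bv * y + Cv) * (2 * b * y - a)))
  with (- ((a * Av + b * Bv) * y - (c * Av - b * Cv)) ^ 2 +
        ((b * Cv - c * Av) ^ 2 + (a * Av + b * Bv) * (c * Bv + a * Cv))) by ring.
  pose proof (pow2_ge_0 ((a * Av + b * Bv) * y - (c * Av - b * Cv))). lra.
Qed.

Lemma R_mono Av Bv Cv a b c y1 y2 :
  (b * Cv - c * Av) ^ 2 + (a * Av + b * Bv) * (c * Bv + a * Cv) < 0 ->
  y1 < y2 -> (forall w, y1 <= w <= y2 -> qf a b c w <> 0) ->
  (a * Av + b * Bv) * (Pf Av Bv Cv y2 / qf a b c y2 - Pf Av Bv Cv y1 / qf a b c y1) < 0.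
Proof.
  intros HQ H12 Hq.
  set (L := a * Av + b * Bv).
  destruct (MVT_gen (fun y => Pf Av Bv Cv y / qf a b c y) y1 y2
     (fun y => ((2 * Av * y + Bv) * qf a b c y - Pf Av Bv Cv y * (2 * b * y - a)) / (qf a b c y ^ 2)))
     as [m [Hm E]].
  - rewrite Rmin_left, Rmax_right by lra. intros y Hy.
    assert (Hqy := Hq y ltac:(lra)). unfold qf, Pf in *.
    auto_derive. auto. field. auto.
  - rewrite Rmin_left, Rmax_right by lra. intros y Hy.
    assert (Hqy := Hq y ltac:(lra)).
    apply continuity_pt_filterlim. apply (ex_derive_continuous (fun y => Pf Av Bv Cv y / qf a b c y)).
    unfold qf, Pf in *. auto_derive. auto.
  - rewrite Rmin_left, Rmax_right in Hm by lra.
    simpl in E. rewrite E.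
    assert (Hqm := Hq m Hm).
    assert (K := key_alg Av Bv Cv a b c m HQ). fold L in K.
    set (N := (2 * Av * m + Bv) * qf a b c m - Pf Av Bv Cv m * (2 * b * m - a)) in *.
    assert (Hq2 : 0 < qf a b c m ^ 2) by (simpl; rewrite Rmult_1_r; apply Rsqr_pos_lt; auto).
    replace (L * (N / qf a b c m ^ 2 * (y2 - y1))) with ((L * N) * ((y2 - y1) / qf a b c m ^ 2))
      by (field; auto).
    assert (0 < (y2 - y1) / qf a b c m ^ 2) by (apply Rdiv_lt_0_compat; [lra | exact Hq2]).
    set (X := (y2 - y1) / qf a b c m ^ 2) in *. set (Y := L * N) in *. replace (L * (N / (qf a b c m * (qf a b c m * 1)) * (y2 - y1))) with (Y * X) by (unfold X, Y; simpl; field; auto). nra.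
Qed.

Lemma q_root_sign Av Bv Cv a b c r :
  (b * Cv - c * Av) ^ 2 + (a * Av + b * Bv) * (c * Bv + a * Cv) < 0 ->
  qf a b c r = 0 -> (a * Av + b * Bv) * Pf Av Bv Cv r * (2 * b * r - a) > 0.
Proof.
  intros HQ Hr. assert (K := key_alg Av Bv Cv a b c r HQ). rewrite Hr in K. lra.
Qed.

Lemma zero_sol A B C : abel_solution A B C (fun _ => 0).
Proof.
  intros t Ht. unfold has_deriv_on01.
  replace (abel_rhs A B C t 0) with 0 by (unfold abel_rhs; ring).
  apply filterlim_locally. intros eps. exists eps. intros h _ _.
  unfold ball; simpl; unfold AbsRing_ball, abs, minus, plus, opp; simpl.
  replace ((0 - 0) / h + - 0) with 0 by (unfold Rdiv; ring). rewrite Rabs_R0. apply cond_pos.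
Qed.

Lemma orbit_nz A B C x : smooth A -> smooth B -> smooth C ->
  nonzero_periodic_orbit A B C x -> forall t, 0 <= t <= 1 -> x t <> 0.
Proof.
  intros SA SB SC [[Hs _] [t1 [Ht1 Hx1]]] t Ht E.
  apply Hx1. apply (uniq A B C x (fun _ => 0) SA SB SC Hs (zero_sol A B C) t Ht E t1 Ht1).
Qed.

Lemma deriv_sign x t d : has_deriv_on01 x t d -> d <> 0 ->
  exists del, 0 < del /\ forall s, 0 <= s <= 1 -> s <> t -> Rabs (s - t) < del ->
    d * ((x s - x t) / (s - t)) > 0.
Proof.
  intros H Hd.
  destruct (within_unpack x t d H (Rabs d) (Rabs_pos_lt d Hd)) as [del [Hdel Hu]].
  exists del; split; auto. intros s Hs Hst Hsd.
  specialize (Hu (s - t) Hsd ltac:(lra) ltac:(replace (t + (s - t)) with s by ring; lra)).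
  replace (t + (s - t)) with s in Hu by ring.
  set (u := (x s - x t) / (s - t)) in *.
  unfold Rabs in Hu; destruct Rcase_abs in Hu; unfold Rabs in Hu; destruct Rcase_abs in Hu; nra.
Qed.

Lemma orbit_q A B C a b c sg x : smooth A -> smooth B -> smooth C ->
  (forall t, 0 <= t <= 1 -> sg * (a * A t + b * B t) > 0) ->
  (forall t, 0 <= t <= 1 -> (b * C t - c * A t) ^ 2 + (a * A t + b * B t) * (c * B t + a * C t) < 0) ->
  nonzero_periodic_orbit A B C x -> forall t, 0 <= t <= 1 -> qf a b c (x t) <> 0.
Proof.
  intros SA SB SC Hsg HQ Hx t0 Ht0 Hq0.
  assert (Hnz := orbit_nz A B C x SA SB SC Hx).
  destruct Hx as [[Hs Hper] _].
  set (r := x t0) in *.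
  assert (Hr : r <> 0) by (apply Hnz; auto).
  assert (HP : forall t, 0 <= t <= 1 -> sg * Pf (A t) (B t) (C t) r * (2 * b * r - a) > 0).
  { intros t Ht. assert (H1 := q_root_sign _ _ _ a b c r (HQ t Ht) Hq0).
    assert (H2 := Hsg t Ht).
    set (L := a * A t + b * B t) in *. set (Z := Pf (A t) (B t) (C t) r * (2 * b * r - a)) in *.
    replace (sg * Pf (A t) (B t) (C t) r * (2 * b * r - a)) with (sg * Z) by (unfold Z; ring).
    assert (L * Z > 0) by (unfold Z; rewrite <- Rmult_assoc; auto).
    nra. }
  set (k := sg * (2 * b * r - a) * r).
  set (F := fun s => k * (ext x s - r)).
  assert (HC : forall s, continuity_pt F s).
  { intros s. unfold F. apply continuity_pt_mult. apply continuity_pt_const; intros ? ?; auto.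
    apply continuity_pt_minus. apply (sol_cont A B C x Hs). apply continuity_pt_const; intros ? ?; auto. }
  assert (HZ : ZP F).
  { intros t Ht Ft.
    assert (Hk : k <> 0).
    { intros E. specialize (HP t Ht). unfold k in E.
      assert (sg * (2 * b * r - a) = 0) by (apply Rmult_integral in E; tauto).
      replace (sg * Pf (A t) (B t) (C t) r * (2 * b * r - a)) with
        (sg * (2 * b * r - a) * Pf (A t) (B t) (C t) r) in HP by ring.
      rewrite H in HP. lra. }
    unfold F in Ft. rewrite ext_id in Ft by auto.
    assert (Ext : x t = r) by (apply Rmult_integral in Ft; destruct Ft; [contradiction|lra]).
    set (d := abel_rhs A B C t (x t)).
    assert (Ed : d = r * Pf (A t) (B t) (C t) r) by (unfold d, abel_rhs, Pf; rewrite Ext; ring).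
    assert (Hkd : k * d > 0).
    { rewrite Ed. unfold k. specialize (HP t Ht).
      replace (sg * (2 * b * r - a) * r * (r * Pf (A t) (B t) (C t) r)) with
        ((r * r) * (sg * Pf (A t) (B t) (C t) r * (2 * b * r - a))) by ring.
      apply Rmult_gt_0_compat; auto. nra. }
    assert (Hd0 : d <> 0) by (intro E; rewrite E in Hkd; lra).
    destruct (deriv_sign x t d (Hs t Ht) Hd0) as [del [Hdel Hds]].
    exists del; split; auto. intros s Hs1 Hst Hsd.
    specialize (Hds s Hs1 Hst Hsd).
    unfold F. rewrite ext_id by auto. rewrite Ext in Hds.
    set (u := (x s - r) / (s - t)) in *.
    assert (Eu : x s - r = u * (s - t)) by (unfold u; field; lra).
    rewrite Eu.
    assert (k * u > 0).
    { assert (k * u * (d * d) > 0) by (replace (k * u * (d * d)) with ((k * d) * (d * u)) by ring;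
        apply Rmult_gt_0_compat; auto).
      assert (d * d > 0) by nra. nra. }
    assert ((s - t) * (s - t) > 0) by (assert (s - t <> 0) by lra; nra).
    replace (k * (u * (s - t)) * (s - t)) with ((k * u) * ((s - t) * (s - t))) by ring.
    apply Rmult_gt_0_compat; auto. }
  assert (F01 : F 0 = F 1).
  { unfold F. rewrite !ext_id by lra. rewrite Hper. auto. }
  apply (no_zero F HC HZ F01 t0 Ht0). unfold F. rewrite ext_id by auto. unfold r. ring.
Qed.

Definition Good (a b c y z : R) := forall w, Rmin y z <= w <= Rmax y z -> w <> 0 /\ qf a b c w <> 0.

Lemma good_sym a b c y z : Good a b c y z -> Good a b c z y.
Proof. unfold Good; intros H w Hw; apply H; rewrite Rmin_comm, Rmax_comm; auto. Qed.

Lemma good_trans a b c y z u : Good a b c y z -> Good a b c z u -> Good a b c y u.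
Proof.
  unfold Good; intros H1 H2 w Hw.
  destruct (Rle_or_lt (Rmin y z) w); destruct (Rle_or_lt w (Rmax y z)).
  - apply H1; lra.
  - apply H2. unfold Rmin, Rmax in *; repeat destruct Rle_dec; lra.
  - apply H2. unfold Rmin, Rmax in *; repeat destruct Rle_dec; lra.
  - unfold Rmin, Rmax in *; repeat destruct Rle_dec; lra.
Qed.

Lemma good_end a b c y z : Good a b c y z -> z <> 0 /\ qf a b c z <> 0.
Proof. intros H; apply H; unfold Rmin, Rmax; repeat destruct Rle_dec; lra. Qed.

Lemma phi_cont a b c w : continuity_pt (fun s => s * qf a b c s) w.
Proof.
  apply continuity_pt_filterlim. apply (ex_derive_continuous (fun s => s * qf a b c s)).
  unfold qf. auto_derive. auto.
Qed.

Lemma good_nbhd a b c y0 y : Good a b c y0 y ->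
  exists del, 0 < del /\ forall y', Rabs (y' - y) < del -> Good a b c y0 y'.
Proof.
  intros H. destruct (good_end a b c y0 y H) as [H1 H2].
  assert (Hp : y * qf a b c y <> 0) by (apply Rmult_integral_contrapositive; auto).
  destruct (cont_nbhd _ y (phi_cont a b c y) (Rabs (y * qf a b c y)) (Rabs_pos_lt _ Hp)) as [d [Hd Hc]].
  exists d; split; auto. intros y' Hy' w Hw.
  destruct (Rle_or_lt (Rmin y0 y) w); destruct (Rle_or_lt w (Rmax y0 y)).
  - apply H; lra.
  - assert (Hwd : Rabs (w - y) < d) by (unfold Rmin, Rmax, Rabs in *; repeat destruct Rle_dec; repeat destruct Rcase_abs; lra).
    specialize (Hc w Hwd).
    assert (Hw0 : w * qf a b c w <> 0).
    { intros E. rewrite E in Hc. rewrite Rminus_0_l, Rabs_Ropp in Hc. lra. }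
    split; intro E; apply Hw0; rewrite E; ring.
  - assert (Hwd : Rabs (w - y) < d) by (unfold Rmin, Rmax, Rabs in *; repeat destruct Rle_dec; repeat destruct Rcase_abs; lra).
    specialize (Hc w Hwd).
    assert (Hw0 : w * qf a b c w <> 0).
    { intros E. rewrite E in Hc. rewrite Rminus_0_l, Rabs_Ropp in Hc. lra. }
    split; intro E; apply Hw0; rewrite E; ring.
  - unfold Rmin, Rmax in *; repeat destruct Rle_dec; lra.
Qed.

Definition hf a b c y0 y := RInt (fun s => / (s * qf a b c s)) y0 y.

Lemma integrand_cont a b c z : z <> 0 -> qf a b c z <> 0 -> continuous (fun s => / (s * qf a b c s)) z.
Proof.
  intros H1 H2. apply (ex_derive_continuous (fun s => / (s * qf a b c s))).
  unfold qf in *. auto_derive. apply Rmult_integral_contrapositive; split; auto.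
Qed.

Lemma h_der a b c y0 y : Good a b c y0 y -> is_derive (hf a b c y0) y (/ (y * qf a b c y)).
Proof.
  intros H. unfold hf.
  apply (is_derive_RInt (fun s => / (s * qf a b c s)) (fun z => RInt (fun s => / (s * qf a b c s)) y0 z) y0 y).
  - destruct (good_nbhd a b c y0 y H) as [d [Hd Hn]].
    exists (mkposreal d Hd). intros y' Hy'.
    assert (Hr : Rabs (y' - y) < d) by exact Hy'.
    apply (RInt_correct (V := R_CompleteNormedModule)).
    apply (ex_RInt_continuous (V := R_CompleteNormedModule)).
    intros z Hz. assert (G := Hn y' Hr). destruct (G z Hz). apply integrand_cont; auto.
  - destruct (good_end a b c y0 y H). apply integrand_cont; auto.
Qed.

Lemma two_orbits A B C a b c x1 x2 :
  (forall t, 0 <= t <= 1 -> (b * C t - c * A t) ^ 2 + (a * A t + b * B t) * (c * B t + a * C t) < 0) ->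
  abel_solution A B C x1 -> abel_solution A B C x2 ->
  x1 0 = x1 1 -> x2 0 = x2 1 ->
  (forall t, 0 <= t <= 1 -> x1 t <> x2 t) ->
  (forall t, 0 <= t <= 1 -> Good a b c (x1 0) (x1 t)) ->
  (forall t, 0 <= t <= 1 -> Good a b c (x1 0) (x2 t)) -> False.
Proof.
  intros HQ S1 S2 P1 P2 Hne G1 G2.
  set (y0 := x1 0).
  set (h := hf a b c y0).
  set (H := fun t => h (ext x2 t) - h (ext x1 t)).
  set (R := fun t y => Pf (A t) (B t) (C t) y / qf a b c y).
  set (dH := fun t => R (clamp t) (ext x2 t) - R (clamp t) (ext x1 t)).
  assert (Hd : forall x, abel_solution A B C x -> (forall t, 0 <= t <= 1 -> Good a b c y0 (x t)) ->
     forall t, 0 < t < 1 -> is_derive (fun s => h (ext x s)) t (R (clamp t) (ext x t))).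
  { intros x Sx Gx t Ht.
    assert (Dx := sol_der A B C x Sx t Ht).
    assert (Dh := h_der a b c y0 (ext x t) ltac:(rewrite ext_id by lra; apply Gx; lra)).
    assert (D := is_derive_comp _ _ _ _ _ Dh Dx).
    eapply is_derive_eq. exact D.
    destruct (good_end a b c y0 (x t) (Gx t ltac:(lra))) as [N1 N2].
    unfold scal; simpl; unfold mult; simpl. unfold R. rewrite clamp_id, ext_id by lra.
    unfold abel_rhs, Pf. unfold qf in *. field. auto. }
  assert (Hc : forall x, abel_solution A B C x -> (forall t, 0 <= t <= 1 -> Good a b c y0 (x t)) ->
     forall t, continuity_pt (fun s => h (ext x s)) t).
  { intros x Sx Gx t.
    apply (continuity_pt_comp (ext x) h). apply (sol_cont A B C x Sx).
    apply continuity_pt_filterlim. apply (ex_derive_continuous h).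
    eexists. apply h_der. unfold ext. apply Gx. apply clamp_in. }
  destruct (MVT_gen H 0 1 dH) as [m [Hm E]].
  - rewrite Rmin_left, Rmax_right by lra. intros t Ht.
    apply (is_derive_minus (fun s => h (ext x2 s)) (fun s => h (ext x1 s))); [apply Hd | apply Hd]; auto.
  - intros t _. apply continuity_pt_minus; apply Hc; auto.
  - rewrite Rmin_left, Rmax_right in Hm by lra.
    assert (E0 : H 1 = H 0).
    { unfold H. rewrite !ext_id by lra. rewrite P1, P2. auto. }
    rewrite E0 in E. unfold dH, R in E. rewrite clamp_id, !ext_id in E by lra.
    assert (Gm : Good a b c (x1 m) (x2 m)).
    { apply good_trans with y0. apply good_sym. apply G1; auto. apply G2; auto. }
    destruct (Rlt_or_le (x1 m) (x2 m)) as [Hlt|Hle].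
    + assert (K := R_mono (A m) (B m) (C m) a b c (x1 m) (x2 m) (HQ m Hm) Hlt
          ltac:(intros w Hw; apply Gm; unfold Rmin, Rmax; destruct Rle_dec; lra)).
      replace (Pf (A m) (B m) (C m) (x2 m) / qf a b c (x2 m) - Pf (A m) (B m) (C m) (x1 m) / qf a b c (x1 m))
        with 0 in K by lra. lra.
    + assert (Hlt : x2 m < x1 m) by (assert (x1 m <> x2 m) by (apply Hne; auto); lra).
      assert (K := R_mono (A m) (B m) (C m) a b c (x2 m) (x1 m) (HQ m Hm) Hlt
          ltac:(intros w Hw; apply Gm; unfold Rmin, Rmax; destruct Rle_dec; lra)).
      replace (Pf (A m) (B m) (C m) (x1 m) / qf a b c (x1 m) - Pf (A m) (B m) (C m) (x2 m) / qf a b c (x2 m))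
        with 0 in K by lra. lra.
Qed.

Lemma good_path A B C a b c x : abel_solution A B C x ->
  (forall t, 0 <= t <= 1 -> x t <> 0 /\ qf a b c (x t) <> 0) ->
  forall t, 0 <= t <= 1 -> Good a b c (x 0) (x t).
Proof.
  intros Sx Hx t Ht w Hw.
  destruct (IVT_gen (ext x) 0 t w (sol_cont A B C x Sx)) as [s [Hs Es]].
  { rewrite !ext_id by lra. auto. }
  rewrite Rmin_left, Rmax_right in Hs by lra.
  rewrite ext_id in Es by lra. rewrite <- Es. apply Hx. lra.
Qed.

Lemma roots a b c : a <> 0 \/ b <> 0 -> exists z1 z2, forall w, qf a b c w = 0 -> w = z1 \/ w = z2.
Proof.
  intros Hab. destruct (Req_dec b 0) as [Hb|Hb].
  - subst. assert (a <> 0) by tauto. exists (c / a), (c / a). intros w Hw. left.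
    unfold qf in Hw. field_simplify_eq; auto. lra.
  - set (D := a ^ 2 - 4 * b * c).
    destruct (Rle_or_lt 0 D) as [HD|HD].
    + exists ((a + sqrt D) / (2 * b)), ((a - sqrt D) / (2 * b)). intros w Hw.
      assert (E : Rsqr (2 * b * w - a) = Rsqr (sqrt D)).
      { rewrite Rsqr_sqrt by auto. unfold Rsqr, D. unfold qf in Hw.
        replace ((2 * b * w - a) * (2 * b * w - a)) with (4 * b * (b * w ^ 2 - a * w + c) + (a ^ 2 - 4 * b * c)) by ring.
        rewrite Hw. ring. }
      apply Rsqr_eq in E. destruct E as [E|E]; [left|right]; field_simplify_eq; auto; lra.
    + exists 0, 0. intros w Hw. exfalso.
      assert (Rsqr (2 * b * w - a) = D).
      { unfold Rsqr, D. unfold qf in Hw.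
        replace ((2 * b * w - a) * (2 * b * w - a)) with (4 * b * (b * w ^ 2 - a * w + c) + (a ^ 2 - 4 * b * c)) by ring.
        rewrite Hw. ring. }
      pose proof (Rle_0_sqr (2 * b * w - a)). lra.
Qed.

Definition kf (z1 z2 y : R) : nat :=
  ((if Rlt_dec 0 y then 1 else 0) + (if Rlt_dec z1 y then 1 else 0) + (if Rlt_dec z2 y then 1 else 0))%nat.

Lemma kf_le z1 z2 y : (kf z1 z2 y <= 3)%nat.
Proof. unfold kf; repeat destruct Rlt_dec; simpl; lia. Qed.

Lemma same_k z1 z2 y y' w : y < y' -> kf z1 z2 y = kf z1 z2 y' -> y < w < y' ->
  w <> 0 /\ w <> z1 /\ w <> z2.
Proof.
  intros H1 H2 H3. unfold kf in H2.
  repeat destruct Rlt_dec; simpl in H2; try lia; repeat split; intro; subst; lra.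
Qed.

Lemma good_k a b c z1 z2 y y' : (forall w, qf a b c w = 0 -> w = z1 \/ w = z2) ->
  y <> 0 /\ qf a b c y <> 0 -> y' <> 0 /\ qf a b c y' <> 0 ->
  kf z1 z2 y = kf z1 z2 y' -> Good a b c y y'.
Proof.
  intros Hr Hy Hy' Hk w Hw.
  destruct (Req_dec w y) as [->|N1]; auto.
  destruct (Req_dec w y') as [->|N2]; auto.
  assert (S : w <> 0 /\ w <> z1 /\ w <> z2).
  { destruct (Rlt_or_le y y') as [Hl|Hl].
    - rewrite Rmin_left, Rmax_right in Hw by lra. apply (same_k z1 z2 y y'); auto; lra.
    - rewrite Rmin_right, Rmax_left in Hw by lra.
      assert (y' < y) by (destruct (Req_dec y y'); [subst; lra | lra]).
      apply (same_k z1 z2 y' y); auto; lra. }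
  destruct S as [S0 [S1 S2]]. split; auto. intro E. destruct (Hr w E); auto.
Qed.

Lemma pigeon (l : list (R -> R)) (f : (R -> R) -> nat) d :
  (forall x, In x l -> (f x <= 3)%nat) -> (5 <= length l)%nat ->
  exists i j, (i < j < length l)%nat /\ f (nth i l d) = f (nth j l d).
Proof.
  intros Hf Hl. apply NNPP. intros Hn.
  assert (ND : NoDup (map f l)).
  { apply (NoDup_nth (map f l) (f d)). intros i j Hi Hj E.
    rewrite length_map in Hi, Hj. rewrite !map_nth in E.
    destruct (Nat.lt_total i j) as [Hij|[Hij|Hij]]; auto; exfalso; apply Hn.
    - exists i, j; split; auto.
    - exists j, i; split; auto. }
  assert (Inc : incl (map f l) (0 :: 1 :: 2 :: 3 :: nil)%nat).
  { intros y Hy. apply in_map_iff in Hy. destruct Hy as [x [Ex Hx]].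
    specialize (Hf x Hx). rewrite Ex in Hf. simpl.
    destruct y as [|[|[|[|y]]]]; auto; lia. }
  assert (Hlen := NoDup_incl_length ND Inc). rewrite length_map in Hlen. simpl in Hlen. lia.
Qed.

Theorem theorem5p2 (A B C : R -> R) :
  smooth A -> smooth B -> smooth C ->
  (exists a b c : R,
      (exists t, 0 <= t <= 1 /\ a * A t + b * B t <> 0) /\
      ((forall t, 0 <= t <= 1 -> 0 <= a * A t + b * B t) \/
       (forall t, 0 <= t <= 1 -> a * A t + b * B t <= 0)) /\
      (forall t, 0 <= t <= 1 ->
         (b * C t - c * A t) ^ 2 + (a * A t + b * B t) * (c * B t + a * C t) < 0)) ->
  forall xs : list (R -> R),
    (forall x, In x xs -> nonzero_periodic_orbit A B C x) ->
    (forall i j, (i < j < length xs)%nat ->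
       differ_on01 (nth i xs (fun _ => 0)) (nth j xs (fun _ => 0))) ->
    (length xs <= 4)%nat.
Proof.
  intros SA SB SC [a [b [c [_ [Hsgn HQ]]]]] xs Hall Hdiff.
  destruct (Nat.le_gt_cases (length xs) 4) as [|Hgt]; auto. exfalso.
  assert (HL : forall t, 0 <= t <= 1 -> a * A t + b * B t <> 0).
  { intros t Ht E. specialize (HQ t Ht). rewrite E in HQ.
    pose proof (pow2_ge_0 (b * C t - c * A t)). lra. }
  assert (Hsg : exists sg, forall t, 0 <= t <= 1 -> sg * (a * A t + b * B t) > 0).
  { destruct Hsgn as [Hp|Hn].
    - exists 1. intros t Ht. specialize (Hp t Ht). specialize (HL t Ht). lra.
    - exists (-1). intros t Ht. specialize (Hn t Ht). specialize (HL t Ht). lra. }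
  destruct Hsg as [sg Hsg].
  assert (Hab : a <> 0 \/ b <> 0).
  { destruct (Req_dec a 0); destruct (Req_dec b 0); auto. exfalso.
    apply (HL 0 ltac:(lra)). subst. ring. }
  destruct (roots a b c Hab) as [z1 [z2 Hr]].
  assert (Facts : forall x, In x xs -> forall t, 0 <= t <= 1 -> x t <> 0 /\ qf a b c (x t) <> 0).
  { intros x Hx t Ht. split.
    - apply (orbit_nz A B C x SA SB SC (Hall x Hx) t Ht).
    - apply (orbit_q A B C a b c sg x SA SB SC Hsg HQ (Hall x Hx) t Ht). }
  set (d := fun _ : R => 0).
  destruct (pigeon xs (fun x => kf z1 z2 (x 0)) d ltac:(intros; apply kf_le) ltac:(lia))
    as [i [j [Hij Ek]]].
  set (x1 := nth i xs d) in *. set (x2 := nth j xs d) in *.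
  assert (I1 : In x1 xs) by (apply nth_In; lia).
  assert (I2 : In x2 xs) by (apply nth_In; lia).
  destruct (Hall x1 I1) as [[S1 P1] _]. destruct (Hall x2 I2) as [[S2 P2] _].
  assert (Hne : forall t, 0 <= t <= 1 -> x1 t <> x2 t).
  { intros t Ht E. destruct (Hdiff i j Hij) as [t' [Ht' Hd']]. apply Hd'.
    apply (uniq A B C x1 x2 SA SB SC S1 S2 t Ht E t' Ht'). }
  assert (G0 : Good a b c (x1 0) (x2 0)).
  { apply (good_k a b c z1 z2); auto; apply Facts; auto; lra. }
  apply (two_orbits A B C a b c x1 x2 HQ S1 S2 P1 P2 Hne).
  - apply (good_path A B C a b c x1 S1). apply Facts; auto.
  - intros t Ht. apply good_trans with (x2 0); auto.
    apply (good_path A B C a b c x2 S2). apply Facts; auto.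
  auto.
Qed.
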